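(* Let $G$ be a locally compact abelian group, $X$ a locally convex topological vector space over $\mathbf{C}$, $n\in\mathbf{Z}_+$, and $H$ a closed subgroup of $G$ such that $G/H$ is a torsion group. Then: (a) the restriction map $r:P^n(G,X)\to P^n(H,X)$, $p\mapsto p|_H$, is one-to-one, so $\dim P^n(G,X)\le\dim P^n(H,X)$; (b) if moreover $G/H$ is of bounded order and $P^n(H)$ is finite dimensional, then $r:P^n(G,X)\to P^n(H,X)$ is a linear isomorphism.
   Context: $\mathbf{Z}_+=\{0,1,2,\dots\}$. A group is torsion if every element has finite order, and of bounded order if the orders of its elements are bounded. For an abelian topological group $S$, a continuous $p:S\to X$ is a polynomial of degree at most $n$ if for all $s,t\in S$ the map $m\mapsto p(s+mt)$, $m\in\mathbf{Z}_+$, is a polynomial in $m$ of degree at most $n$ with coefficients in $X$; $P^n(S,X)$ is the space of these and $P^n(S)=P^n(S,\mathbf{C})$. *)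

(* Defs.v *)
From HB Require Import structures.
From mathcomp Require Import all_boot all_order all_algebra.
From mathcomp Require Import all_classical all_reals all_analysis.
From mathcomp.real_closed Require Import complex.
Set Implicit Arguments. Unset Strict Implicit. Unset Printing Implicit Defensive.
Import Order.TTheory GRing.Theory Num.Theory.
Local Open Scope classical_set_scope.
Local Open Scope ring_scope.

Definition is_subgroup (G : zmodType) (H : set G) : Prop :=
  H 0 /\ (forall x y, H x -> H y -> H (x - y)).

Definition quotient_torsion (G : zmodType) (H : set G) : Prop :=
  forall g : G, exists k : nat, (0 < k)%N /\ H (g *+ k).

Definition quotient_bounded_order (G : zmodType) (H : set G) : Prop :=
  exists N : nat, forall g : G, exists k : nat, (0 < k <= N)%N /\ H (g *+ k).

Definition poly_along (G : zmodType) (K : numDomainType) (X : lmodType K)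
  (n : nat) (p : G -> X) (s t : G) : Prop :=
  exists a : 'I_n.+1 -> X,
    forall m : nat, p (s + t *+ m) = \sum_(k < n.+1) ((m%:R : K) ^+ k) *: a k.

Definition is_poly (G : topologicalZmodType) (K : numDomainType) (X : tvsType K)
  (n : nat) (p : G -> X) : Prop :=
  continuous p /\ forall s t : G, poly_along n p s t.

(* the restriction of p to the subgroup H (with the subspace topology) lies in
   P^n(H, X); elements of P^n(H,X) are represented by functions on G, only their
   values on H matter *)
Definition is_poly_on (G : topologicalZmodType) (K : numDomainType) (X : tvsType K)
  (H : set G) (n : nat) (p : G -> X) : Prop :=
  {within H, continuous p} /\ forall s t : G, H s -> H t -> poly_along n p s t.

(* P^n(H) = P^n(H, K) is finite dimensional: finitely many elements of P^n(H)
   span it (as functions on H) *)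
Definition Pn_on_findim (G : topologicalZmodType) (K : numFieldType)
  (H : set G) (n : nat) : Prop :=
  exists (d : nat) (b : 'I_d -> G -> K^o),
    (forall i, is_poly_on H n (b i)) /\
    forall q : G -> K^o, is_poly_on H n q ->
      exists c : 'I_d -> K, forall h, H h -> q h = \sum_(i < d) c i * b i h.

(* Main.v *)
Require Import Defs.
From HB Require Import structures.
From mathcomp Require Import all_boot all_order all_algebra.
From mathcomp Require Import all_classical all_reals all_analysis.
From mathcomp.real_closed Require Import complex.
Set Implicit Arguments. Unset Strict Implicit. Unset Printing Implicit Defensive.
Import Order.TTheory GRing.Theory Num.Theory.
Local Open Scope classical_set_scope.
Local Open Scope ring_scope.

Lemma interp (K : fieldType) (n : nat) (x : nat -> K) (y : K) :
  injective x -> exists c : 'I_n.+1 -> K,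
  forall k : 'I_n.+1, \sum_(i < n.+1) c i * x i ^+ k = y ^+ k.
Proof.
move=> xi.
exists (fun i => ((tnth (@lagrange K n.+1 x) i : {poly K})).[y]) => k.
have := @lagrange_gen K n.+1 x (ltn0Sn n) xi ('X^k).
rewrite size_polyXn ltn_ord => /(_ isT) /(congr1 (horner^~ y)).
rewrite hornerXn horner_sum => ->; apply: eq_bigr => i _.
by rewrite hornerM hornerC hornerXn mulrC.
Qed.

Lemma interp_mod (K : fieldType) (X : lmodType K) (n : nat) (x : nat -> K)
  (c : 'I_n.+1 -> K) (y : K) (a : 'I_n.+1 -> X) :
  (forall k : 'I_n.+1, \sum_(i < n.+1) c i * x i ^+ k = y ^+ k) ->
  \sum_(i < n.+1) c i *: (\sum_(k < n.+1) x i ^+ k *: a k)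
  = \sum_(k < n.+1) y ^+ k *: a k.
Proof.
move=> Hc.
under eq_bigr => i _ do rewrite scaler_sumr.
rewrite exchange_big; apply: eq_bigr => k _.
rewrite -Hc scaler_suml; apply: eq_bigr => i _; by rewrite scalerA.
Qed.

Lemma Hmuln (G : zmodType) (H : set G) g k :
  is_subgroup H -> H g -> H (g *+ k).
Proof.
move=> [H0 HB] Hg; elim: k => [|k IH]; first by rewrite mulr0n.
have HN : forall y, H y -> H (- y) by move=> y Hy; rewrite -sub0r; exact: HB.
by rewrite mulrS -[g *+ k]opprK; apply: HB => //; apply: HN.
Qed.

Lemma cont_add (T : topologicalType) (M : topologicalZmodType) (f g : T -> M) :
  continuous f -> continuous g -> continuous (fun x => f x + g x).
Proof.
move=> cf cg x.
apply: (@continuous_comp _ _ _ (fun y => (f y, g y)) (fun z : M * M => z.1 + z.2)).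
  by apply: cvg_pair; [exact: cf|exact: cg].
exact: add_continuous.
Qed.

Lemma cont_natmul (G : topologicalZmodType) k : continuous (fun g : G => g *+ k).
Proof.
elim: k => [|k IH].
  have -> : (fun g : G => g *+ 0) = fun=> 0 by apply: funext => g; rewrite mulr0n.
  exact: cst_continuous.
have -> : (fun g : G => g *+ k.+1) = fun g => g + g *+ k.
  by apply: funext => g; rewrite mulrS.
by apply: cont_add => // x; exact: cvg_id.
Qed.

Lemma cont_scale (T : topologicalType) (K : numFieldType) (M : topologicalLmodType K)
  (c : K) (f : T -> M) : continuous f -> continuous (fun x => c *: f x).
Proof.
move=> cf x.
apply: (@continuous_comp _ _ _ (fun y => (c : K^o, f y)) (fun z : K^o * M => z.1 *: z.2)).
  have := @cvg_pair T K^o M (nbhs x) (nbhs (c:K^o)) (nbhs (f x)) _ _ _ (fun=> c) f. move=> /(_ _ _ _ (cvg_cst _) (cf x)); apply.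
exact: scale_continuous.
Qed.

Lemma cont_sum (T : topologicalType) (M : topologicalZmodType) n (f : 'I_n -> T -> M) :
  (forall i, continuous (f i)) -> continuous (fun x => \sum_(i < n) f i x).
Proof.
move=> cf; elim: n f cf => [|n IH] f cf.
  have -> : (fun x => \sum_(i < 0) f i x) = fun=> 0.
    by apply: funext => x; rewrite big_ord0.
  exact: cst_continuous.
have -> : (fun x => \sum_(i < n.+1) f i x) = fun x => f ord0 x + \sum_(i < n) f (lift ord0 i) x.
  by apply: funext => x; rewrite big_ord_recl.
by apply: cont_add => //; apply: IH.
Qed.

Lemma cont_within_comp (G : topologicalType) (Y : topologicalType) (H : set G)
  (q : G -> Y) (phi : G -> G) :
  {within H, continuous q} -> continuous phi -> (forall g, H (phi g)) ->
  continuous (fun g => q (phi g)).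
Proof.
move=> /subspace_continuousP cq cphi Hphi x.
move=> W Wn.
have := cq (phi x) (Hphi x) W Wn.
rewrite /= /within /= => /(cphi x) /=.
rewrite nbhs_simpl /=.
apply: filterS => y /= Hy; exact: Hy.
Qed.

Theorem lemma3p3 (R : realType) (G : topologicalZmodType) (X : tvsType R[i])
  (n : nat) (H : set G) :
  hausdorff_space G -> locally_compact [set: G] ->
  is_subgroup H -> closed H -> quotient_torsion H ->
  (forall p1 p2 : G -> X, is_poly n p1 -> is_poly n p2 ->
     (forall h, H h -> p1 h = p2 h) -> p1 = p2) /\
  (quotient_bounded_order H -> Pn_on_findim R[i] H n ->
     forall q : G -> X, is_poly_on H n q ->
       exists p : G -> X, is_poly n p /\ forall h, H h -> p h = q h).
Proof.
move=> _ _ Hsub _ tors; split.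
  move=> p1 p2 [_ P1] [_ P2] Heq; apply: funext => g.
  have [K [K0 HK]] := tors g.
  have [a Ha] := P1 0 g; have [b Hb] := P2 0 g.
  pose x := fun i : nat => ((i * K)%N%:R : R[i]).
  have xi : injective x.
    by move=> i j /eqP; rewrite /x eqr_nat eqn_pmul2r // => /eqP.
  have [c Hc] := @interp _ n x 1 xi.
  have E : forall i : 'I_n.+1, p1 (0 + g *+ (i * K)) = p2 (0 + g *+ (i * K)).
    move=> i; apply: Heq; rewrite add0r mulnC mulrnA; exact: Hmuln.
  have -> : g = 0 + g *+ 1 by rewrite add0r.
  rewrite Ha Hb -!(interp_mod a Hc) -(interp_mod b Hc).
  apply: eq_bigr => i _; by rewrite -Ha -Hb E.
move=> [N HN] _ q [qc qp].
pose M := N`!.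
have M0 : (0 < M)%N by apply: fact_gt0.
have HM : forall g, H (g *+ M).
  move=> g; have [k [/andP [k0 kN] Hk]] := HN g.
  have /dvdnP [d Md] : (k %| M)%N by apply: dvdn_fact; rewrite k0.
  by rewrite Md mulnC mulrnA; apply: Hmuln.
have HiM : forall g i, H (g *+ (i * M)) by move=> g i; rewrite mulnC mulrnA; exact: Hmuln.
pose x := fun i : nat => ((i * M)%N%:R : R[i]).
have xi : injective x.
  by move=> i j /eqP; rewrite /x eqr_nat eqn_pmul2r // => /eqP.
have [c Hc] := @interp _ n x 1 xi.
exists (fun g => \sum_(i < n.+1) c i *: q (g *+ (i * M))); split; last first.
  move=> h Hh; have [b Hb] := qp 0 h Hsub.1 Hh.
  have -> : \sum_(i < n.+1) c i *: q (h *+ (i * M)) =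
            \sum_(i < n.+1) c i *: q (0 + h *+ (i * M)).
    by apply: eq_bigr => i _; rewrite add0r.
  under eq_bigr => i _ do rewrite Hb.
  by rewrite (interp_mod b Hc) -[h in RHS]add0r -[h in RHS]mulr1n Hb.
split.
  apply: cont_sum => i; apply: cont_scale.
  apply: (@cont_within_comp _ _ H) => //; exact: cont_natmul.
move=> s t.
have : forall i : 'I_n.+1, exists A : 'I_n.+1 -> X, forall m : nat,
    q (s *+ (i * M) + t *+ (i * M) *+ m) =
    \sum_(k < n.+1) ((m%:R : R[i]) ^+ k) *: A k.
  by move=> i; apply: qp.
move=> /choice [A HA].
exists (fun k => \sum_(i < n.+1) c i *: A i k) => m.
have -> : \sum_(i < n.+1) c i *: q ((s + t *+ m) *+ (i * M)) =
   \sum_(i < n.+1) c i *: \sum_(k < n.+1) ((m%:R : R[i]) ^+ k) *: A i k.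
  apply: eq_bigr => i _; by rewrite -HA mulrnDl -!mulrnA [(m * _)%N]mulnC.
under eq_bigr => i _ do rewrite scaler_sumr.
rewrite exchange_big; apply: eq_bigr => k _.
rewrite scaler_sumr; apply: eq_bigr => i _; by rewrite !scalerA mulrC.
Qed.
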